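(* Let $\mathbf{F}$ be a Baire foliage tree on a topological space $X$ and let $p\in X$. Then: (a) $\mathbf{F}$ is nonincreasing, $\mathrm{flesh}\,\mathbf{F}=\mathbf{F}_{0_{\mathbf{F}}}$, and the height of $\mathbf{F}$ is $\omega$; (b) for every node $v$ of $\mathbf{F}$, the leaf $\mathbf{F}_v$ is closed-and-open in $X$ and $|\mathbf{F}_v|=2^{\omega}$; (c) $\mathrm{scope}_{\mathbf{F}}(p)$ is a branch in $\mathbf{F}$; (d) for every $n\in\omega$ there is exactly one $v\in\mathrm{scope}_{\mathbf{F}}(p)$ with $\mathrm{height}_{\mathbf{F}}(v)=n$.
   Context: $\omega=\{0,1,2,\dots\}$, ${}^{<\omega}\omega$ is the set of finite sequences of natural numbers. A tree is a strict partial order $(T,<)$ in which the set of predecessors of every node is well-ordered; $\mathrm{height}_T(x)$ is the ordinal isomorphic to the set of predecessors of $x$; the height of $T$ is the least ordinal $\beta$ such that no node has height $\beta$; a branch is a $\subseteq$-maximal chain; $\mathrm{sons}_T(x)$ is the set of immediate successors of $x$; $0_T$ denotes the least node. A foliage tree is a pair $\mathbf{F}=(T,l)$ with $T$ a tree (the skeleton) and $l$ a function on the nodes of $T$; $\mathbf{F}_x:=l(x)$ is the leaf at $x$; tree notions apply to $\mathbf{F}$ via its skeleton; $\mathrm{flesh}\,\mathbf{F}=\bigcup_x\mathbf{F}_x$; $\mathrm{scope}_{\mathbf{F}}(p)=\{x:p\in\mathbf{F}_x\}$. $\mathbf{F}$ is nonincreasing if $y\geq x$ implies $\mathbf{F}_y\subseteq\mathbf{F}_x$.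 $\mathbf{F}$ is locally strict if for every non-maximal node $x$, $\mathbf{F}_x$ is the union of the pairwise disjoint sets $\mathbf{F}_s$, $s\in\mathrm{sons}(x)$; $\mathbf{F}$ has strict branches if it has at least one node and for every branch $B$, $\bigcap_{x\in B}\mathbf{F}_x$ is a singleton; $\mathbf{F}$ is open in $X$ if all leaves are open in $X$; $\mathbf{F}$ is a foliage $\omega,\omega$-tree if its skeleton is order-isomorphic to $({}^{<\omega}\omega,\subsetneq)$. A Baire foliage tree on $X$ is an open in $X$, locally strict foliage $\omega,\omega$-tree with strict branches such that $\mathbf{F}_{0_{\mathbf{F}}}=X$. *)

(* Defs.v *)
From HB Require Import structures.
From mathcomp Require Import all_boot all_order.
From mathcomp Require Import boolp classical_sets functions cardinality topology.
Set Implicit Arguments. Unset Strict Implicit. Unset Printing Implicit Defensive.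
Local Open Scope classical_set_scope.
Local Open Scope card_scope.

(* A foliage tree is given by a node type [N], a strict order [lt] on [N]
   (the skeleton) and a leaf function [l : N -> set X]. *)
Section FoliageTrees.
Variables (N : Type) (lt : N -> N -> Prop).

Definition preds (x : N) : set N := [set y | lt y x].

Definition strict_porder : Prop :=
  (forall x, ~ lt x x) /\ (forall x y z, lt x y -> lt y z -> lt x z).

Definition well_ordered_on (S : set N) : Prop :=
  (forall x y, S x -> S y -> x = y \/ lt x y \/ lt y x) /\
  (forall A, A `<=` S -> A !=set0 -> exists m, A m /\ forall y, A y -> y <> m -> lt m y).

Definition is_tree : Prop :=
  strict_porder /\ forall x, well_ordered_on (preds x).

(* height_T(x) = n (a finite ordinal): the predecessors of x form a
   well-ordered set of order type n, i.e. there are exactly n of them *)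
Definition has_height (x : N) (n : nat) : Prop := preds x #= `I_n.

(* height of the tree is omega: the least ordinal not realised as the height
   of a node is omega, i.e. every finite n is realised and every node has a
   finite height (so omega is not realised) *)
Definition tree_height_omega : Prop :=
  (forall n, exists x, has_height x n) /\ (forall x, exists n, has_height x n).

Definition is_least (r : N) : Prop := forall x, x <> r -> lt r x.

Definition is_maximal (x : N) : Prop := ~ exists y, lt x y.

Definition sons (x : N) : set N :=
  [set y | lt x y /\ ~ exists z, lt x z /\ lt z y].

Definition chain (S : set N) : Prop :=
  forall x y, S x -> S y -> x = y \/ lt x y \/ lt y x.

Definition branch (S : set N) : Prop :=
  chain S /\ forall S', chain S' -> S `<=` S' -> S' = S.

(* skeleton order-isomorphic to (^{<omega} omega, strict inclusion) *)
Definition strict_prefix (s t : seq nat) : Prop := prefix s t /\ s <> t.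

Definition omega_omega_tree : Prop :=
  exists f : N -> seq nat, bijective f /\
    forall x y, lt x y <-> strict_prefix (f x) (f y).

Variable (X : Type) (l : N -> set X).

Definition nonincreasing : Prop :=
  forall x y, (lt x y \/ x = y) -> l y `<=` l x.

Definition flesh : set X := \bigcup_(x in [set: N]) l x.

Definition scope (p : X) : set N := [set x | l x p].

Definition locally_strict : Prop :=
  forall x, ~ is_maximal x ->
    l x = \bigcup_(s in sons x) l s /\
    (forall s t, sons x s -> sons x t -> s <> t -> l s `&` l t = set0).

Definition strict_branches : Prop :=
  inhabited N /\
  forall B, branch B -> exists p, \bigcap_(x in B) l x = [set p].

End FoliageTrees.

Definition baire_foliage_tree (X : topologicalType) (N : Type)
    (lt : N -> N -> Prop) (l : N -> set X) : Prop :=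
  [/\ is_tree lt /\ omega_omega_tree lt,
      (forall x, open (l x)),
      locally_strict lt l,
      strict_branches lt l
    & (forall r, is_least lt r -> l r = [set: X])].

(* Main.v *)
Require Import Defs.
From HB Require Import structures.
From mathcomp Require Import all_boot all_order.
From mathcomp Require Import boolp classical_sets functions cardinality topology.
From mathcomp Require Import zify.
Local Open Scope classical_set_scope.
Local Open Scope card_scope.
Set Implicit Arguments. Unset Strict Implicit. Unset Printing Implicit Defensive.
Lemma Lsub_rcons (X : Type) (L : seq nat -> set X)
  (LS1 : forall s p, L s p <-> exists k, L (rcons s k) p) s k p :
  L (rcons s k) p -> L s p.
Proof. by move=> H; apply/LS1; exists k. Qed.

Lemma Lsub_cat (X : Type) (L : seq nat -> set X)
  (LS1 : forall s p, L s p <-> exists k, L (rcons s k) p) s t p :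
  L (s ++ t) p -> L s p.
Proof.
elim/last_ind: t => [|t k IH]; first by rewrite cats0.
by rewrite -rcons_cat => /(Lsub_rcons LS1).
Qed.

Lemma Lsub_prefix (X : Type) (L : seq nat -> set X)
  (LS1 : forall s p, L s p <-> exists k, L (rcons s k) p) s t p :
  prefix s t -> L t p -> L s p.
Proof. by move=> /prefixP[u ->]; apply: Lsub_cat. Qed.

Lemma Llevel (X : Type) (L : seq nat -> set X)
  (LS1 : forall s p, L s p <-> exists k, L (rcons s k) p)
  (Lroot : forall p, L [::] p) n p : exists t, size t = n /\ L t p.
Proof.
elim: n => [|n [t [st Lt]]]; first by exists [::].
have [k Lk] := (LS1 t p).1 Lt.
by exists (rcons t k); rewrite size_rcons st.
Qed.

Lemma Ldisj (X : Type) (L : seq nat -> set X)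
  (LS1 : forall s p, L s p <-> exists k, L (rcons s k) p)
  (LS2 : forall s k k' p, L (rcons s k) p -> L (rcons s k') p -> k = k')
  s t p : size s = size t -> L s p -> L t p -> s = t.
Proof.
elim/last_ind: s t => [|s a IH] t.
  by move=> /esym/size0nil ->.
case/lastP: t => [|t b]; first by rewrite size_rcons.
rewrite !size_rcons => -[st] Ls Lt.
have e := IH t st (Lsub_rcons LS1 Ls) (Lsub_rcons LS1 Lt).
by rewrite -e in Lt *; rewrite (LS2 _ _ _ _ Ls Lt).
Qed.

Lemma Lchain (X : Type) (L : seq nat -> set X)
  (LS1 : forall s p, L s p <-> exists k, L (rcons s k) p)
  (LS2 : forall s k k' p, L (rcons s k) p -> L (rcons s k') p -> k = k')
  s t p : size s <= size t -> L s p -> L t p -> prefix s t.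
Proof.
move=> st Ls Lt.
have Lt' := Lsub_prefix LS1 (prefix_take t (size s)) Lt.
rewrite prefixE; apply/eqP; apply: (Ldisj LS1 LS2 _ Lt' Ls).
rewrite size_take; case: ltngtP st => //.

Qed.

Lemma prefix_mkseq (a : nat -> nat) n m : n <= m -> prefix (mkseq a n) (mkseq a m).
Proof.
elim: m => [|m IH]; first by rewrite leqn0 => /eqP ->; exact: prefix_refl.
rewrite leq_eqVlt => /orP[/eqP ->|]; first exact: prefix_refl.
move=> /IH H; rewrite mkseqS; apply: prefix_trans H _; exact: prefix_rcons.
Qed.

Lemma strict_prefix_size (s t : seq nat) : prefix s t -> s <> t -> size s < size t.
Proof.
move=> pst nst; rewrite ltn_neqAle size_prefix // andbT.
apply/eqP => e; apply: nst; move: pst; rewrite prefixE e take_size => /eqP //.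
Qed.

Theorem corollary5 (X : topologicalType) (N : Type) (lt : N -> N -> Prop)
    (l : N -> set X) (p : X) :
  baire_foliage_tree lt l ->
  [/\ (* (a) *)
      nonincreasing lt l /\
      (forall r, is_least lt r -> flesh l = l r) /\
      tree_height_omega lt,
      (* (b) *)
      (forall v, open (l v) /\ closed (l v) /\ l v #= [set: set nat]),
      (* (c) *)
      branch lt (scope l p)
    & (* (d) *)
      (forall n : nat, exists! v, scope l p v /\ has_height lt v n)].
Proof.
rewrite /baire_foliage_tree /omega_omega_tree.
move=> [[_ [f [[g fK gK] ltE]]] Hopen LS Hsb Hroot].
pose L s := l (g s).
have lE x : l x = L (f x) by rewrite /L fK.
have ltS x y : lt x y -> size (f x) < size (f y).
  by move=> /ltE [pf ne]; apply: strict_prefix_size.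
have ltP s t : prefix s t -> s <> t -> lt (g s) (g t).
  by move=> pst nst; apply/ltE; rewrite !gK.
have finj x y : f x = f y -> x = y by move=> e; rewrite -(fK x) e fK.
have sonsR s k : sons lt (g s) (g (rcons s k)).
  split.
    apply: ltP; first exact: prefix_rcons.
    by move=> /(congr1 size); rewrite size_rcons; lia.
  move=> [z [/ltS h1 /ltS h2]]; move: h1 h2; rewrite !gK size_rcons; lia.
have sonsL s y : sons lt (g s) y -> exists k, f y = rcons s k.
  move=> [/ltE]; rewrite gK => -[pf ne] nz.
  have sz := strict_prefix_size pf ne.
  case: (ltngtP (size (f y)) (size s).+1) => hlt; first lia.
    exfalso; apply: nz; exists (g (take (size s).+1 (f y))); split.
      apply: ltP.
        by rewrite prefixE take_takel //; rewrite prefixE in pf.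
      by move=> /(congr1 size) /=; rewrite size_take hlt; lia.
    apply/ltE; rewrite gK; split; first exact: prefix_take.
    by move=> /(congr1 size) /=; rewrite size_take hlt; lia.
  move: pf => /prefixP [u e]; rewrite e size_cat in hlt.
  case: u e hlt => [|a [|b u]] e /=; try lia.
  by move=> _; exists a; rewrite e cats1.
have nmax s : ~ is_maximal lt (g s).
  by move=> H; apply: H; exists (g (rcons s 0)); exact: (sonsR s 0).1.
have LS1 s q : L s q <-> exists k, L (rcons s k) q.
  have [E _] := LS _ (nmax s); rewrite /L E; split.
    by move=> [y /sonsL [k e] ly]; exists k; rewrite -e fK.
  by move=> [k lk]; exists (g (rcons s k)) => //; exact: sonsR.
have LS2 s k k' q : L (rcons s k) q -> L (rcons s k') q -> k = k'.
  move=> h1 h2; apply: contrapT => nk; have [_ D] := LS _ (nmax s).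
  have ne : g (rcons s k) <> g (rcons s k').
    by move=> e; apply: nk; have := congr1 f e; rewrite !gK => /(congr1 (last 0)); rewrite !last_rcons.
  have := D _ _ (sonsR s k) (sonsR s k') ne.
  move=> D'; have : (l (g (rcons s k)) `&` l (g (rcons s k'))) q by [].
  by rewrite D'.
have Lroot q : L [::] q.
  have least : is_least lt (g [::]).
    move=> x nx; apply/ltE; rewrite gK; split; first exact: prefix0s.
    by move=> e; apply: nx; rewrite e fK.
  by rewrite /L (Hroot _ least).
have brP S : (forall x y, S x -> S y -> prefix (f x) (f y) \/ prefix (f y) (f x)) ->
    (forall m, exists z, S z /\ size (f z) = m) -> branch lt S.
  move=> Hc Hl.
  have chS : chain lt S.
    move=> x y Sx Sy; case: (Hc x y Sx Sy) => h.
      case: (eqVneq (f x) (f y)) => [/finj->|ne]; first by left.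
      by right; left; apply/ltE; split=> //; exact/eqP.
    case: (eqVneq (f x) (f y)) => [/finj->|ne]; first by left.
    by right; right; apply/ltE; split=> //; apply/eqP; rewrite eq_sym.
  split=> // S' chS' sub; apply/seteqP; split=> // y S'y.
  have [z [Sz sz]] := Hl (size (f y)).
  case: (chS' y z S'y (sub _ Sz)) => [->//|[/ltS|/ltS]]; rewrite sz ltnn //.
have Br a : exists q, forall q', (forall n, L (mkseq a n) q') <-> q' = q.
  pose B := [set x | exists n, f x = mkseq a n].
  have bB : branch lt B.
    apply: brP.
      move=> x y [n ->] [m ->]; case: (leqP n m) => h; [left|right];
        apply: prefix_mkseq => //; exact: ltnW.
    by move=> m; exists (g (mkseq a m)); rewrite gK size_mkseq; split=> //; exists m.
  have [q Hq] := Hsb.2 B bB.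
  exists q => q'; split=> [H|->].
    suff: [set q] q' by [].
    by rewrite -Hq => x [n e]; rewrite lE e; exact: H.
  have : (\bigcap_(x in B) l x) q by rewrite Hq.
  by move=> H n; apply: (H (g (mkseq a n))); exists n; rewrite gK.
have hh x : has_height lt x (size (f x)).
  rewrite /has_height.
  have -> : preds lt x = (fun k => g (take k (f x))) @` `I_(size (f x)).
    apply/seteqP; split.
      move=> y /ltE [pf ne]; exists (size (f y)); first exact: strict_prefix_size.
      by move: pf; rewrite prefixE => /eqP ->; exact: fK.
    move=> y [k kl <-]; rewrite /preds /=; apply/ltE; rewrite gK; split.
      exact: prefix_take.
    by move=> /(congr1 size); rewrite size_take kl; move: kl => /= kl; lia.
  apply: inj_card_eq => i j /= hi hj e.
  have := congr1 (size \o f) e; rewrite /= !gK !size_take.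
  by move: hi hj; rewrite !inE /= => -> ->.
have hu x n : has_height lt x n -> n = size (f x).
  by move=> H; apply/card_eq_II; exact: card_eq_trans (card_esym H) (hh x).
have scB q : branch lt (scope l q).
  apply: brP.
    move=> x y; rewrite /scope /= !lE => hx hy.
    case: (leqP (size (f x)) (size (f y))) => h.
      by left; exact: (Lchain LS1 LS2 h hx hy).
    by right; exact: (Lchain LS1 LS2 (ltnW h) hy hx).
  move=> m; have [t [st Lt]] := Llevel LS1 Lroot m q.
  by exists (g t); rewrite gK; split.
split.
- split.
    by move=> x y [/ltE [pf _]|->] //; rewrite !lE => q; exact: (Lsub_prefix LS1 pf).
  split.
    move=> r Hr; rewrite (Hroot r Hr); apply/seteqP; split=> // q _.
    by exists r => //; rewrite (Hroot r Hr).
  split=> [n|x]; last by exists (size (f x)); exact: hh.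
  by exists (g (nseq n 0)); have := hh (g (nseq n 0)); rewrite gK size_nseq.
- move=> v; split; first exact: Hopen.
  rewrite lE; set s := f v; split.
    have E : L s = ~` \bigcup_(t in [set t | size t = size s /\ t <> s]) L t.
      apply/seteqP; split.
        move=> q Lq [t [st nt] Lt]; apply: nt; exact: (Ldisj LS1 LS2 st Lt Lq).
      move=> q nq; have [t [st Lt]] := Llevel LS1 Lroot (size s) q.
      case: (eqVneq t s) => [<-//|nt].
      by exfalso; apply: nq; exists t => //; split=> //; exact/eqP.
    rewrite E closedC; apply: bigcup_open => t _; exact: Hopen.
  apply: Cantor_Bernstein.
    pose k q := [set n | exists t, pickle t = n /\ L t q].
    have kinj : {in L s &, injective k}.
      move=> q q' _ _ e.
      have hqq t : L t q -> L t q'.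
        move=> Lt; have : k q (pickle t) by exists t.
        by rewrite e => -[t' [pt Lt']]; rewrite -(pcan_inj pickleK pt).
      have [r Hr] := Hsb.2 _ (scB q).
      have hq : [set r] q by rewrite -Hr => x.
      have hq' : [set r] q' by rewrite -Hr => x hx; rewrite lE; apply: hqq; rewrite -lE.
      by rewrite hq hq'.
    have := inj_card_eq kinj; rewrite card_eq_le => /andP[_ H].
    exact: card_le_trans H (card_leT _).
  pose pt a := projT1 (cid (Br a)).
  have ptS a n : L (mkseq a n) (pt a).
    exact: ((projT2 (cid (Br a)) (pt a)).2 erefl n).
  have ptI a b : pt a = pt b -> forall m, a m = b m.
    move=> e m; have h1 := ptS a m.+1; rewrite e in h1.
    have h2 : size (mkseq a m.+1) = size (mkseq b m.+1) by rewrite !size_mkseq.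
    have /(congr1 (nth 0 ^~ m)) := Ldisj LS1 LS2 h2 h1 (ptS b m.+1).
    by rewrite !nth_mkseq.
  pose al (A : set nat) n := if n < size s then nth 0 s n else (if `[< A (n - size s) >] then 1 else 0).
  pose h A := pt (al A).
  have hinj : {in [set: set nat] &, injective h}.
    move=> A B _ _ /ptI e; apply/seteqP; split => m;
      have := e (m + size s); rewrite /al ltnNge leq_addl /= addnK;
      case: (asboolP (A m)) => HA; case: (asboolP (B m)) => HB //.
  have hS A : L s (h A).
    have := ptS (al A) (size s).
    suff -> : mkseq (al A) (size s) = s by [].
    apply: (@eq_from_nth _ 0); rewrite ?size_mkseq // => i hi.
    by rewrite nth_mkseq // /al hi.
  have := inj_card_eq hinj; rewrite card_eq_le => /andP[_ H].
  apply: card_le_trans H _; apply: subset_card_le => _ [A _ <-]; exact: hS.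
- exact: scB.
- move=> n; have [t [st Lt]] := Llevel LS1 Lroot n p; exists (g t); split.
    split; first by [].
    by have := hh (g t); rewrite gK st.
  move=> v [sv hv]; have e := hu _ _ hv.
  apply: finj; rewrite gK; apply/esym; apply: (Ldisj LS1 LS2 _ _ Lt).
    by rewrite -e st.
  by rewrite -lE.
Qed.
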